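(* Let $S=\{a_1,\ldots,a_m\}$ be an alphabet of $m$ distinct letters and let $r_1,\ldots,r_m$ be nonnegative integers. For $k\ge0$ let $n_k$ denote the number of factorizations on $S$ with exactly $k$ parts such that each part is a Carlitz word and, for each $i$, the letter $a_i$ is used exactly $r_i$ times in total. Then \[ \prod_{i=1}^m l_{r_i}(x) = \sum_{k\ge 0} n_k\, l_k(x). \]
   Context: A word is a finite sequence of letters; it is Carlitz if no two adjacent letters are equal. A factorization on $S$ is an ordered list $(\phi_1)\cdots(\phi_k)$ of nonempty words on $S$, its parts. The polynomials $l_k$ are defined by $\sum_{k\ge0}l_k(x)z^k=e^{xz/(1+z)}$, i.e. $l_k(x)=(-1)^kL_k^{(-1)}(x)$ where $L_k^{(\alpha)}$ are the generalized Laguerre polynomials. *)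

(* Defs.v *)
From HB Require Import structures.
From mathcomp Require Import all_boot all_order all_algebra.
Set Implicit Arguments. Unset Strict Implicit. Unset Printing Implicit Defensive.
Import Order.TTheory GRing.Theory Num.Theory.
Local Open Scope ring_scope.

(* The alphabet S = {a_1,...,a_m} of m distinct letters is modelled by 'I_m;
   words on S are elements of seq 'I_m; a factorization is a seq of words. *)

Definition carlitz (m : nat) (w : seq 'I_m) : bool :=
  sorted (fun a b : 'I_m => a != b) w.

Definition words_upto (m L : nat) : seq (seq 'I_m) :=
  flatten [seq [seq val t | t : l.-tuple 'I_m] | l <- iota 1 L].

Fixpoint facts_upto (m L k : nat) : seq (seq (seq 'I_m)) :=
  if k is k'.+1 then
    [seq w :: f | w <- words_upto m L, f <- facts_upto m L k']
  else [:: [::]].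

Definition good_fact (m : nat) (r : 'I_m -> nat) (f : seq (seq 'I_m)) : bool :=
  all (@carlitz m) f && [forall i : 'I_m, count_mem i (flatten f) == r i].

(* Such a factorization has total
   length sum_i r_i, so every part has length <= sum_i r_i; hence enumerating
   parts of length at most sum_i r_i counts all of them. *)
Definition nfact (m : nat) (r : 'I_m -> nat) (k : nat) : nat :=
  count (good_fact r) (facts_upto m (\sum_(i < m) r i)%N k).

(* l_k(x) = [z^k] exp(x z/(1+z)).  Expanding,
   exp(xz/(1+z)) = sum_j x^j/j! z^j (1+z)^(-j), and
   [z^k] z^j (1+z)^(-j) = (-1)^(k-j) C(k-1, j-1) for 1 <= j <= k, so
   l_0 = 1 and l_k = sum_{j=1}^k (-1)^(k-j) C(k-1,j-1) x^j / j!  (k >= 1). *)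
Definition lpoly (R : numFieldType) (k : nat) : {poly R} :=
  if k is k'.+1 then
    \sum_(1 <= j < k.+1)
      (((-1) ^+ (k - j) * ('C(k', j.-1))%:R / (j`!)%:R) *: 'X^j)
  else 1.

(* Main.v *)
Require Import Defs.
From HB Require Import structures.
From mathcomp Require Import all_boot all_order all_algebra.
From mathcomp Require Import mpoly.
Import Order.TTheory GRing.Theory Num.Theory.
Local Open Scope ring_scope.
Set Implicit Arguments. Unset Strict Implicit. Unset Printing Implicit Defensive.
Section Small.
Variable (R : comNzRingType) (m : nat).
Local Notation M := {mpoly R[m]}.

Definition small (n : nat) (f : M) :=
  forall mu : 'X_{1..m}, (mdeg mu < n)%N -> f@_mu = 0.

Lemma small_le n n' f : (n <= n')%N -> small n' f -> small n f.
Proof. by move=> le h mu lt; apply: h; apply: leq_trans le. Qed.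
Lemma small0 n : small n 0.
Proof. by move=> mu _; rewrite mcoeff0. Qed.
Lemma smallD n f g : small n f -> small n g -> small n (f + g).
Proof. by move=> hf hg mu lt; rewrite mcoeffD hf ?hg ?addr0. Qed.
Lemma smallN n f : small n f -> small n (- f).
Proof. by move=> hf mu lt; rewrite mcoeffN hf ?oppr0. Qed.
Lemma smallB n f g : small n f -> small n g -> small n (f - g).
Proof. by move=> hf hg; apply: smallD => //; apply: smallN. Qed.
Lemma small_sum n (I : Type) (s : seq I) (P : pred I) (F : I -> M) :
  (forall i, P i -> small n (F i)) -> small n (\sum_(i <- s | P i) F i).
Proof.
move=> h; elim/big_rec: _ => [|i x Pi hx]; first exact: small0.
by apply: smallD => //; apply: h.
Qed.
Lemma small_mul n p f g : small n f -> small p g -> small (n + p) (f * g).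
Proof.
move=> hf hg mu lt; rewrite mcoeffM big1 // => k /eqP mE.
have : (mdeg k.1 + mdeg k.2 < n + p)%N by rewrite -mdegD -mE.
case: (ltnP (mdeg k.1) n) => [h1|h1] h.
  by rewrite hf ?mul0r.
by rewrite hg ?mulr0 // -(ltn_add2l (mdeg k.1)); apply: leq_trans h _; rewrite leq_add2r.
Qed.
Lemma small_mulr n f g : small n f -> small n (f * g).
Proof. by move=> hf; rewrite -[n]addn0; apply: small_mul => // mu. Qed.
Lemma small_mull n f g : small n g -> small n (f * g).
Proof. by move=> hg; rewrite mulrC; apply: small_mulr. Qed.
Lemma small_exp a k : small 1 a -> small k (a ^+ k).
Proof.
move=> ha; elim: k => [|k ih]; first by move=> mu.
by rewrite exprS -add1n; apply: small_mul.
Qed.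
Lemma small_X i : small 1 'X_i.
Proof.
move=> mu; rewrite ltnS leqn0 mdeg_eq0 => /eqP ->.
by rewrite mcoeffX; case: eqP => // /mnmP /(_ i); rewrite !mnmE eqxx.
Qed.

Variable N : nat.
Definition eqL (f g : M) := small N.+1 (f - g).
Lemma eqL_refl f : eqL f f.
Proof. by rewrite /eqL subrr; apply: small0. Qed.
Lemma eqL_sym f g : eqL f g -> eqL g f.
Proof. by rewrite /eqL -opprB => /smallN; rewrite opprK. Qed.
Lemma eqL_trans f g h : eqL f g -> eqL g h -> eqL f h.
Proof. by move=> a b; have := smallD a b; rewrite addrA subrK. Qed.
Lemma eqL_add f f' g g' : eqL f f' -> eqL g g' -> eqL (f + g) (f' + g').
Proof. by move=> a b; have := smallD a b; rewrite addrACA -opprD. Qed.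
Lemma eqL_opp f f' : eqL f f' -> eqL (- f) (- f').
Proof. by move=> a; rewrite /eqL -opprD; apply: smallN. Qed.
Lemma eqL_mul f f' g g' : eqL f f' -> eqL g g' -> eqL (f * g) (f' * g').
Proof.
move=> a b; have := smallD (small_mulr g a) (small_mull f' b).
by rewrite mulrBl mulrBr addrA subrK.
Qed.
Lemma eqL_sum (I : Type) (s : seq I) (P : pred I) (F G : I -> M) :
  (forall i, P i -> eqL (F i) (G i)) ->
  eqL (\sum_(i <- s | P i) F i) (\sum_(i <- s | P i) G i).
Proof.
move=> h; elim/big_rec2: _ => [|i x y Pi hx]; first exact: eqL_refl.
by apply: eqL_add => //; apply: h.
Qed.
Lemma eqL_prod (I : Type) (s : seq I) (P : pred I) (F G : I -> M) :
  (forall i, P i -> eqL (F i) (G i)) ->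
  eqL (\prod_(i <- s | P i) F i) (\prod_(i <- s | P i) G i).
Proof.
move=> h; elim/big_rec2: _ => [|i x y Pi hx]; first exact: eqL_refl.
by apply: eqL_mul => //; apply: h.
Qed.
Lemma eqL_exp f g k : eqL f g -> eqL (f ^+ k) (g ^+ k).
Proof.
move=> h; elim: k => [|k ih]; first exact: eqL_refl.
by rewrite !exprS; apply: eqL_mul.
Qed.
Lemma eqL_small f g : small N.+1 (f - g) -> eqL f g.
Proof. by []. Qed.
Lemma eqL_drop f g : small N.+1 g -> eqL (f + g) f.
Proof. by rewrite /eqL addrC addKr. Qed.
Lemma eqL_coef f g mu : eqL f g -> (mdeg mu <= N)%N -> f@_mu = g@_mu.
Proof. by move=> h le; apply/eqP; rewrite -subr_eq0 -mcoeffB h. Qed.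
End Small.

Section W.
Variable (R : comNzRingType) (m : nat).
Local Notation M := {mpoly R[m]}.

Definition cont (w : seq 'I_m) : 'X_{1..m} := (\sum_(a <- w) U_(a))%MM.
Definition mono (w : seq 'I_m) : M := 'X_[cont w].
Fixpoint wl (l : nat) : seq (seq 'I_m) :=
  if l is l'.+1 then [seq a :: w | a <- enum 'I_m, w <- wl l'] else [:: [::]].

Lemma mono_nil : mono [::] = 1.
Proof. by rewrite /mono /cont big_nil mpolyX0. Qed.
Lemma mono_cons a w : mono (a :: w) = 'X_a * mono w.
Proof. by rewrite /mono /cont big_cons mpolyXD. Qed.
Lemma mdeg_cont w : mdeg (cont w) = size w.
Proof.
elim: w => [|a w ih]; first by rewrite /cont big_nil mdeg0.
by rewrite /cont big_cons mdegD mdeg1 -/(cont w) ih.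
Qed.
Lemma mem_wl l w : (w \in wl l) = (size w == l).
Proof.
elim: l w => [|l ih] [|a w] //=.
  by apply/negbTE/allpairsP => -[[b w'] [] ].
apply/allpairsP/idP => [[[b w'] /= [_ hw' [_ ->]]]|hs].
  by rewrite eqSS -ih.
by exists (a, w); rewrite /= mem_enum ih -eqSS.
Qed.
Lemma sum_wlS (P : pred (seq 'I_m)) l :
  \sum_(w <- wl l.+1 | P w) mono w =
  \sum_(b <- enum 'I_m) 'X_b * \sum_(w <- wl l | P (b :: w)) mono w.
Proof.
rewrite big_mkcond /= (big_allpairs_dep (op := +%R)); apply: eq_bigr => b _.
rewrite mulr_sumr [RHS]big_mkcond /=; apply: eq_bigr => w _.
by rewrite mono_cons; case: (P _); rewrite ?mulr0.
Qed.
Lemma small_mono n w : (n <= size w)%N -> small n (mono w).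
Proof.
move=> h mu lt; rewrite mcoeffX; case: eqP => // e.
by move: lt; rewrite -e mdeg_cont ltnNge h.
Qed.

Definition Dl l : M := \sum_(w <- wl l | carlitz w) mono w.
Definition Fl l a : M := \sum_(w <- wl l | carlitz (a :: w)) mono w.

Lemma D0 : Dl 0 = 1.
Proof. by rewrite /Dl big_cons big_nil /= mono_nil addr0. Qed.
Lemma F0 a : Fl 0 a = 1.
Proof. by rewrite /Fl big_cons big_nil /= mono_nil addr0. Qed.
Lemma DS l : Dl l.+1 = \sum_(b <- enum 'I_m) 'X_b * Fl l b.
Proof. by rewrite /Dl sum_wlS. Qed.
Lemma FS l a : Fl l.+1 a = \sum_(b <- enum 'I_m | b != a) 'X_b * Fl l b.
Proof.
rewrite /Fl sum_wlS [RHS]big_mkcond /=; apply: eq_bigr => b _.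
rewrite eq_sym; case: eqP => [->|ne].
  by rewrite big1 ?mulr0 // => w; rewrite /carlitz /= eqxx.
by congr (_ * _); apply: eq_bigl => w; rewrite /carlitz /=; case: eqP.
Qed.
Lemma small_F n l a : (n <= l)%N -> small n (Fl l a).
Proof.
move=> h; rewrite /Fl big_seq_cond; apply: small_sum => w /andP[hw _].
by apply: small_mono; move: hw; rewrite mem_wl => /eqP ->.
Qed.

Variable N : nat.
Definition E : M := \sum_(l < N.+1) Dl l.
Definition Ea a : M := \sum_(l < N.+1) Fl l a.
Definition v (y : M) : M := \sum_(i < N.+1) (- y) ^+ i.
Definition q (y : M) : M := y * v y.
Definition sig : M := \sum_(b <- enum 'I_m) q 'X_b.

Lemma E_rec0 : E = 1 + \sum_(l < N) \sum_(b <- enum 'I_m) 'X_b * Fl l b.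
Proof.
rewrite /E big_ord_recl D0; congr (_ + _); apply: eq_bigr => l _.
by rewrite lift0 DS.
Qed.
Lemma Ea_rec0 a : Ea a = 1 + \sum_(l < N) \sum_(b <- enum 'I_m | b != a) 'X_b * Fl l b.
Proof.
rewrite /Ea big_ord_recl F0; congr (_ + _); apply: eq_bigr => l _.
by rewrite lift0 FS.
Qed.
Lemma Ea_rec a : (1 + 'X_a) * Ea a = E + 'X_a * Fl N a.
Proof.
rewrite mulrDl mul1r {2}/Ea big_ord_recr /= mulrDr mulr_sumr addrA.
congr (_ + _); rewrite Ea_rec0 E_rec0 -addrA; congr (_ + _).
rewrite -big_split /=; apply: eq_bigr => l _.
by rewrite (bigD1_seq a) ?mem_enum ?enum_uniq //= addrC.
Qed.
Lemma v_eq y : (1 + y) * v y = 1 - (- y) ^+ N.+1.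
Proof.
have := subrX1 (- y) N.+1; rewrite -/(v y) => h.
by rewrite -opprB h -mulNr opprB opprK addrC.
Qed.
Lemma v_inv y : small 1 y -> eqL N ((1 + y) * v y) 1.
Proof.
move=> hy; rewrite /eqL v_eq addrC addKr; apply: smallN.
by apply: small_exp; apply: smallN.
Qed.
Lemma Ea_eq a : eqL N (Ea a) (v 'X_a * E).
Proof.
apply: (@eqL_trans _ _ _ _ (((1 + 'X_a) * v 'X_a) * Ea a)).
  by rewrite -{1}[Ea a]mul1r; apply: eqL_mul; [apply: eqL_sym; apply: v_inv; apply: small_X|apply: eqL_refl].
rewrite [(1 + _) * _]mulrC -mulrA Ea_rec mulrDr.
apply: eqL_drop; apply: small_mull; rewrite -add1n; apply: small_mul.
  exact: small_X.
exact: small_F.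
Qed.
Lemma E_eq : eqL N E (1 + sig * E).
Proof.
rewrite {1}E_rec0 exchange_big /= -/(sig) /sig mulr_suml.
apply: eqL_add; first exact: eqL_refl.
apply: eqL_sum => b _; rewrite -mulr_sumr /q -mulrA.
apply: (@eqL_trans _ _ _ _ ('X_b * Ea b)).
  rewrite /Ea big_ord_recr /= mulrDr; apply: eqL_sym; apply: eqL_drop.
  by rewrite -add1n; apply: small_mul; [apply: small_X|apply: small_F].
by apply: eqL_mul; [apply: eqL_refl|apply: Ea_eq].
Qed.
Definition C : M := E - 1.
Lemma small_C : small 1 C.
Proof.
rewrite /C E_rec0 [1 + _]addrC addrK; apply: small_sum => l _.
by apply: small_sum => b _; apply: small_mulr; apply: small_X.
Qed.
Lemma small_sig : small 1 sig.
Proof. by apply: small_sum => b _; apply: small_mulr; apply: small_X. Qed.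
Lemma qC : eqL N (q C) sig.
Proof.
have h1 : 1 + C = E by rewrite /C addrC subrK.
have hC : eqL N C (sig * (1 + C)).
  rewrite h1 /C; have := eqL_add E_eq (@eqL_refl _ _ N (-1 : M)).
  by rewrite addrAC subrr add0r.
apply: (@eqL_trans _ _ _ _ (sig * (1 + C) * v C)).
  by apply: eqL_mul => //; apply: eqL_refl.
rewrite -mulrA -[X in eqL _ _ X]mulr1; apply: eqL_mul; first exact: eqL_refl.
by apply: v_inv; apply: small_C.
Qed.
End W.

Section V.
Variable (R : comNzRingType) (m N : nat).
Local Notation M := {mpoly R[m]}.

Lemma smallZ n (c : R) (f : M) : small n f -> small n (c *: f).
Proof. by move=> h mu lt; rewrite mcoeffZ h ?mulr0. Qed.

Lemma eqL_scale (c : R) (f g : M) : eqL N f g -> eqL N (c *: f) (c *: g).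
Proof. by rewrite /eqL -scalerBr; apply: smallZ. Qed.

Variable u : nat -> R.
Definition Ex (y : M) : M := \sum_(j < N.+1) u j *: y ^+ j.

Lemma Ex_eqL a b : eqL N a b -> eqL N (Ex a) (Ex b).
Proof.
move=> h; apply: eqL_sum => j _; apply: eqL_scale; exact: eqL_exp.
Qed.

Hypothesis hu : forall i j, u (i + j) *+ 'C(i + j, i) = u i * u j.
Hypothesis hu0 : u 0 = 1.

Lemma Ex0 : Ex 0 = 1.
Proof.
rewrite /Ex big_ord_recl expr0 hu0 scale1r big1 ?addr0 // => i _.
by rewrite expr0n /= scaler0.
Qed.

Lemma Ex_add a b : small 1 a -> small 1 b -> eqL N (Ex (a + b)) (Ex a * Ex b).
Proof.
move=> ha hb.
pose PA := \poly_(i < N.+1) (u i *: a ^+ i).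
pose PB := \poly_(i < N.+1) (u i *: b ^+ i).
have hA : Ex a = PA.[1] by rewrite horner_poly; apply: eq_bigr => i _; rewrite expr1n mulr1.
have hB : Ex b = PB.[1] by rewrite horner_poly; apply: eq_bigr => i _; rewrite expr1n mulr1.
pose H := PA * PB.
have sA i : small i (PA`_i).
  rewrite coef_poly; case: ifP => _; last exact: small0.
  by apply: smallZ; apply: small_exp.
have sB i : small i (PB`_i).
  rewrite coef_poly; case: ifP => _; last exact: small0.
  by apply: smallZ; apply: small_exp.
have hH : H = \poly_(n < N.+1 + N) H`_n.
  apply/polyP => n; rewrite coef_poly; case: ltnP => // hn.
  rewrite nth_default //; apply: leq_trans (size_polyMleq _ _) _.
  apply: leq_trans hn; rewrite -subn1 leq_subLR.
  by rewrite add1n -addnS leq_add ?size_poly.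
have -> : Ex a * Ex b = \sum_(n < N.+1 + N) H`_n.
  rewrite hA hB -hornerM -/H {1}hH horner_poly.
  by apply: eq_bigr => i _; rewrite expr1n mulr1.
rewrite big_split_ord /=; apply: eqL_sym; apply: (@eqL_trans _ _ _ _ (\sum_(i < N.+1) H`_i)).
  apply: eqL_drop; apply: small_sum => i _; rewrite /H coefM.
  apply: small_sum => j _.
  apply: (@small_le _ _ _ (j + (N.+1 + i - j))); first by rewrite subnKC ?leq_addr // -ltnS.
  by apply: small_mul.
apply: eqL_sym; rewrite /Ex; apply: eqL_sum => n _.
suff -> : H`_n = u n *: (a + b) ^+ n by apply: eqL_refl.
rewrite /H coefM addrC exprDn scaler_sumr; apply: eq_bigr => i _.
have hi : (i <= n)%N by rewrite -ltnS.
rewrite !coef_poly (leq_ltn_trans hi (ltn_ord n)) (leq_ltn_trans (leq_subr i n) (ltn_ord n)).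
rewrite -scalerAl -scalerAr scalerA.
have <- : u n *+ 'C(n, i) = u i * u (n - i) by have := hu i (n - i); rewrite subnKC.
by rewrite -scalerMnl scalerMnr mulrC.
Qed.

Lemma Ex_sum (I : Type) (s : seq I) (P : pred I) (F : I -> M) :
  (forall i, P i -> small 1 (F i)) ->
  eqL N (Ex (\sum_(i <- s | P i) F i)) (\prod_(i <- s | P i) Ex (F i)).
Proof.
move=> h.
suff : eqL N (Ex (\sum_(i <- s | P i) F i)) (\prod_(i <- s | P i) Ex (F i))
   /\ small 1 (\sum_(i <- s | P i) F i) by case.
elim/big_rec2: _ => [|i x y Pi [hx sx]].
  by rewrite Ex0; split; [apply: eqL_refl|apply: small0].
split; last by apply: smallD => //; apply: h.
apply: eqL_trans (Ex_add (h i Pi) sx) _.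
apply: eqL_mul; [exact: eqL_refl|exact: hx].
Qed.
End V.

Section L.
Variable (R : comNzRingType) (m N : nat).
Local Notation M := {mpoly R[m]}.

Definition cc (k j : nat) : R :=
  if j is j'.+1 then (if k is k'.+1 then (-1) ^+ (k - j) *+ 'C(k', j') else 0)
  else (k == 0%N)%:R.

Lemma cc_pascal k j : cc k.+1 j.+1 + cc k j.+1 = cc k j.
Proof.
case: j => [|j]; case: k => [|k] /=.
- by rewrite addr0 !bin0.
- by rewrite !subn1 /= !bin0 !mulr1n exprS mulN1r addNr.
- by rewrite addr0 bin0n.
rewrite binS mulrnDr !subSS addrAC -[RHS]add0r; congr (_ + _).
case: (ltnP j k) => hjk.
  by rewrite -subnSK // exprS mulN1r mulNrn addNr.
by rewrite bin_small ?ltnS // !mulr0n addr0.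
Qed.

Definition T j (y : M) : M := \sum_(k < N.+1) cc k j *: y ^+ k.

Lemma T_rec j y : small 1 y -> eqL N ((1 + y) * T j.+1 y) (y * T j y).
Proof.
move=> hy.
have eT : T j.+1 y = \sum_(k < N) cc k.+1 j.+1 *: y ^+ k.+1.
  by rewrite /T big_ord_recl /= scale0r add0r.
have eY i : y * T i y = \sum_(k < N) cc k i *: y ^+ k.+1 + cc N i *: y ^+ N.+1.
  rewrite /T mulr_sumr big_ord_recr /=; congr (_ + _).
    by apply: eq_bigr => k _; rewrite -scalerAr -exprS.
  by rewrite -scalerAr -exprS.
rewrite mulrDl mul1r !eY {1}eT addrA -big_split /=.
rewrite (eq_bigr (fun k : 'I_N => cc k j *: y ^+ k.+1)); last first.
  by move=> k _; rewrite -scalerDl cc_pascal.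
apply: eqL_add; first exact: eqL_refl.
by apply: smallB; apply: smallZ; apply: small_exp.
Qed.

Lemma T0 y : T 0 y = 1.
Proof.
rewrite /T big_ord_recl /= scale1r expr0 big1 ?addr0 // => k _.
by rewrite scale0r.
Qed.

Lemma T_pow j y : small 1 y -> eqL N ((q N y) ^+ j) (T j y).
Proof.
move=> hy; elim: j => [|j ih]; first by rewrite expr0 T0; apply: eqL_refl.
rewrite exprS; apply: eqL_trans (eqL_mul (@eqL_refl _ _ N (q N y)) ih) _.
rewrite /q [y * _]mulrC -mulrA.
apply: eqL_trans (eqL_mul (@eqL_refl _ _ N (v N y)) (eqL_sym (T_rec j hy))) _.
rewrite mulrA [v N y * _]mulrC -[X in eqL _ _ X]mul1r.
by apply: eqL_mul; [apply: v_inv|apply: eqL_refl].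
Qed.

Variable u : nat -> R.
Lemma Lser (l : nat -> R) (y : M) :
  (forall k, (k <= N)%N -> l k = \sum_(j < N.+1) cc k j * u j) ->
  small 1 y ->
  eqL N (\sum_(k < N.+1) l k *: y ^+ k) (Ex N u (q N y)).
Proof.
move=> hl hy; apply: eqL_sym.
apply: (@eqL_trans _ _ _ _ (\sum_(j < N.+1) u j *: T j y)).
  by apply: eqL_sum => j _; apply: eqL_scale; apply: T_pow.
have -> : \sum_(j < N.+1) u j *: T j y =
    \sum_(j < N.+1) \sum_(k < N.+1) (cc k j * u j) *: y ^+ k.
  by apply: eq_bigr => j _; rewrite /T scaler_sumr; apply: eq_bigr => k _; rewrite scalerA mulrC.
rewrite exchange_big /=.
have -> : \sum_(k < N.+1) \sum_(j < N.+1) (cc k j * u j) *: y ^+ k =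
    \sum_(k < N.+1) l k *: y ^+ k.
  apply: eq_bigr => k _; rewrite -scaler_suml hl //.
  by have := ltn_ord k; rewrite ltnS.
exact: eqL_refl.
Qed.
End L.

Section F.
Variable (R : comNzRingType) (m N : nat).
Local Notation M := {mpoly R[m]}.

Lemma perm_tuples l : perm_eq [seq val t | t : l.-tuple 'I_m] (wl m l).
Proof.
apply: uniq_perm.
- rewrite map_inj_uniq ?enum_uniq //; exact: val_inj.
- elim: l => [|l ih] //=; apply: allpairs_uniq_dep => //.
  + exact: enum_uniq.
  + by move=> [a w] [b w'] _ _ /= [-> ->].
move=> w; rewrite mem_wl; apply/mapP/idP => [[t _ ->]|/eqP hs].
  by rewrite size_tuple.
by exists (Tuple (introT eqP hs)); rewrite ?mem_enum.
Qed.

Lemma C_words : C R m N = \sum_(w <- words_upto m N | carlitz w) mono R w.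
Proof.
rewrite /C E_rec0 [1 + _]addrC addrK /words_upto big_flatten /= big_map.
have -> : iota 1 N = map S (iota 0 N) by rewrite -(iotaDl 1) .
have -> : iota 0 N = index_iota 0 N by rewrite /index_iota subn0.
rewrite big_map /= big_mkord.
apply: eq_bigr => l _; rewrite -DS /Dl.
by apply: perm_big; rewrite perm_sym perm_tuples.
Qed.

Lemma mono_cat (w w' : seq 'I_m) : mono R (w ++ w') = mono R w * mono R w'.
Proof. by rewrite /mono /cont big_cat mpolyXD. Qed.

Lemma C_pow k : (C R m N) ^+ k =
  \sum_(f <- facts_upto m N k | all (@carlitz m) f) mono R (flatten f).
Proof.
elim: k => [|k ih]; first by rewrite expr0 /= big_cons big_nil /= mono_nil addr0.
rewrite exprS ih C_words /= [RHS]big_mkcond (big_allpairs_dep (op := +%R)) /=.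
rewrite big_mkcond mulr_suml; apply: eq_bigr => w _.
rewrite mulr_sumr [RHS]big_mkcond; case: (carlitz w) => /=.
  by rewrite big_mkcond; apply: eq_bigr => f _; case: ifP; rewrite ?mono_cat.
by rewrite big1 ?big1 // => f _; rewrite mul0r.
Qed.

Lemma cont_i (w : seq 'I_m) i : cont w i = count_mem i w.
Proof.
rewrite /cont mnm_sumE; elim: w => [|a w ih]; first by rewrite big_nil.
by rewrite big_cons /= ih mnm1E.
Qed.

Lemma cont_eq (w : seq 'I_m) (r : 'I_m -> nat) :
  (cont w == [multinom r i | i < m]) = [forall i, count_mem i w == r i].
Proof.
apply/eqP/forallP => [e i|h].
  by rewrite -cont_i e mnmE.
by apply/mnmP => i; rewrite cont_i mnmE; apply/eqP.
Qed.

Lemma coef_Cpow k (r : 'I_m -> nat) :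
  ((C R m N) ^+ k)@_[multinom r i | i < m] =
  (count (good_fact r) (facts_upto m N k))%:R.
Proof.
rewrite C_pow raddf_sum /= -sum1_count natr_sum /good_fact big_mkcondr /=.
apply: eq_bigr => f _; rewrite mcoeffX cont_eq.
by case: [forall _, _].
Qed.

Lemma coef_prod (l : nat -> R) (r : 'I_m -> nat) : (forall i, (r i <= N)%N) ->
  (\prod_(i < m) \sum_(t < N.+1) l t *: ('X_i : M) ^+ t)@_[multinom r i | i < m]
  = \prod_(i < m) l (r i).
Proof.
move=> hr; rewrite bigA_distr_bigA /= raddf_sum /=.
set mr := [multinom r i | i < m].
have e (f : {ffun 'I_m -> 'I_N.+1}) :
    (\prod_(i < m) (l (f i) *: ('X_i : M) ^+ f i))@_mr =
    (\prod_(i < m) l (f i)) * ([multinom (f i : nat) | i < m] == mr)%:R.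
  rewrite scaler_prod mcoeffZ; congr (_ * _); rewrite -mcoeffX mpolyXE_id.
  by congr (_@_ _); apply: eq_bigr => i _; rewrite mnmE.
pose f0 : {ffun 'I_m -> 'I_N.+1} := [ffun i => inord (r i)].
have hf0 i : (f0 i : nat) = r i by rewrite ffunE inordK // ltnS.
have mf0 : [multinom (f0 i : nat) | i < m] = mr.
  by apply/mnmP => i; rewrite !mnmE hf0.
rewrite (bigD1 f0) //= e mf0 eqxx mulr1.
rewrite [X in _ + X]big1 ?addr0.
  by apply: eq_bigr => i _; rewrite hf0.
move=> f ne; rewrite e; case: eqP; rewrite ?mulr0 // => /mnmP h.
case/eqP: ne; apply/ffunP => i; apply: val_inj; rewrite /= hf0.
by have := h i; rewrite !mnmE.
Qed.
End F.


Definition uu (R : numFieldType) (j : nat) : {poly R} := (j`!%:R)^-1 *: 'X^j.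

Lemma fact_neq0 (R : numFieldType) n : (n`!%:R : R) != 0.
Proof. by rewrite pnatr_eq0 -lt0n fact_gt0. Qed.

Lemma uu_hu (R : numFieldType) i j :
  uu R (i + j) *+ 'C(i + j, i) = uu R i * uu R j.
Proof.
rewrite /uu -scalerAl -scalerAr scalerA -exprD scalerMnl.
congr (_ *: _).
have e : ((i + j)`!%:R : R) = 'C(i + j, i)%:R * (i`!%:R * j`!%:R).
  by rewrite -!natrM; have := bin_fact (leq_addr j i); rewrite addKn => ->.
have hC : ('C(i + j, i)%:R : R) != 0 by rewrite pnatr_eq0 -lt0n bin_gt0 leq_addr.
by rewrite e -mulr_natr invfM mulrAC mulVf // mul1r invfM.
Qed.

Lemma uu_hu0 (R : numFieldType) : uu R 0 = 1.
Proof. by rewrite /uu invr1 scale1r expr0. Qed.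

Lemma uu_hl (R : numFieldType) N k : (k <= N)%N ->
  lpoly R k = \sum_(j < N.+1) cc {poly R} k j * uu R j.
Proof.
case: k => [|k] hk.
  rewrite /lpoly big_ord_recl /= big1 ?addr0 ?uu_hu0 ?mulr1 // => j _.
  by rewrite mul0r.
rewrite big_ord_recl /= mul0r add0r /lpoly big_add1 /= big_mkord.
rewrite (big_ord_widen _ (fun j => ((-1) ^+ (k.+1 - j.+1) * ('C(k, j.+1.-1))%:R / ((j.+1)`!)%:R) *: 'X^(j.+1)) hk) big_mkcond /=.
apply: eq_bigr => j _; rewrite /bump /=.
have hp e n : ((-1 : {poly R}) ^+ e *+ n) = ((-1 : R) ^+ e *+ n)%:P.
  by rewrite rmorphMn rmorphXn rmorphN1.
rewrite hp /uu -scalerAr mul_polyC scalerA.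
case: ltnP => hj.
  by congr (_ *: _); rewrite mulr_natr mulrC.
by rewrite bin_small // mulr0n mulr0 scale0r.
Qed.

Unset Implicit Arguments.

Theorem corollary2p8 (R : numFieldType) (m : nat) (r : 'I_m -> nat) :
  \prod_(i < m) lpoly R (r i) =
  \sum_(k < (\sum_(i < m) r i)%N.+1) (nfact r k)%:R *: lpoly R k.
Proof.
set N := (\sum_(i < m) r i)%N.
pose P := {poly R}.
pose M := {mpoly P[m]}.
have hl := @uu_hl R N.
have hr i : (r i <= N)%N by rewrite /N (bigD1 i) //= leq_addr.
have sq (b : 'I_m) : small 1 (q N ('X_b : M)) by apply: small_mulr; apply: small_X.
have key : eqL N (\sum_(k < N.+1) lpoly R k *: (C P m N) ^+ k)
    (\prod_(i < m) \sum_(t < N.+1) lpoly R t *: ('X_i : M) ^+ t).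
  apply: eqL_trans (Lser (u:=uu R) hl (small_C P N)) _.
  have h2 := (Ex_eqL (uu R) (@qC P m N)).
  apply: eqL_trans h2 _.
  have h3 := Ex_sum (N:=N) (@uu_hu R) (@uu_hu0 R) (enum 'I_m) (P:=xpredT)
    (F := fun b => q N ('X_b : M)) (fun b _ => sq b).
  apply: eqL_trans h3 _.
  rewrite big_enum /=.
  apply: eqL_prod => b _; apply: eqL_sym; apply: Lser => //; exact: small_X.
set mr := [multinom r i | i < m].
have hmr : (mdeg mr <= N)%N.
  by rewrite (_ : mdeg mr = N) // mdegE; apply: eq_bigr => i _; rewrite mnmE.
have := eqL_coef key hmr; rewrite coef_prod // => <-.
rewrite raddf_sum /=; apply: eq_bigr => k _.
by rewrite mcoeffZ coef_Cpow mulr_natr scaler_nat.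
Qed.
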